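(* Let $\mathcal{F}$ be a frame and $C_s,C_o\subseteq\mathcal{CH}$. If there is no undirected path in the undirected graph of $\mathcal{F}$ between $C_s$ and $C_o$, then there is no disclosure between $C_s$ and $C_o$.
   Context: A frame $\mathcal{F}$ consists of pairwise disjoint sets $\mathcal{LO}$ (locations), $\mathcal{CH}$ (channels), $\mathcal{D}$ (data). Each channel $c$ either has both a sender $\mathrm{sender}(c)$ and recipient $\mathrm{recipient}(c)$ in $\mathcal{LO}$ (possibly equal), or neither; $\mathrm{chans}(\ell)=\{c:\mathrm{sender}(c)=\ell\text{ or }\mathrm{recipient}(c)=\ell\}$. Each location $\ell$ has a prefix-closed set $\mathrm{traces}(\ell)$ of finite or infinite sequences of labels $(c,v)$, $c\in\mathrm{chans}(\ell)$, $v\in\mathcal{D}$. Events come from a set $E$ with $\mathrm{chan}:E\to\mathcal{CH}$, $\mathrm{msg}:E\to\mathcal{D}$. A system of events $(B,\preceq)$ has $B\subseteq E$, $\preceq$ a partial order with finitely many predecessors per event; it is an execution ($\in\mathrm{exec}(\mathcal{F})$) iff for each location $\ell$ the events whose channel has $\ell$ as sender or recipient are linearly ordered and, as a sequence of labels $(\mathrm{chan}(e),\mathrm{msg}(e))$, lie in $\mathrm{traces}(\ell)$. $\mathcal{B}|_C$ keeps events with channel in $C$ with the restricted order; $\mathrm{lruns}_C=\{\mathcal{A}|_C:\mathcal{A}\in\mathrm{exec}(\mathcal{F})\}$; $J_C^{C'}(\mathcal{B})=\{\mathcal{A}|_{C'}:\mathcal{A}\in\mathrm{exec}(\mathcal{F}),\mathcal{A}|_C=\mathcal{B}\}$.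 There is no disclosure between $C$ and $C'$ iff $J_C^{C'}(\mathcal{B})=\mathrm{lruns}_{C'}$ for every $\mathcal{B}\in\mathrm{lruns}_C$. The undirected graph of $\mathcal{F}$ has vertices $\mathcal{LO}$ and an edge between $\ell_1,\ell_2$ whenever some channel has sender one of them and recipient the other. A path between $C_s$ and $C_o$ is an undirected path from a location that is an endpoint of a channel in $C_o$ to a location that is an endpoint of a channel in $C_s$. *)

(* Defs.v *)
From Stdlib Require Import List Relations.
Import ListNotations.

(* A (finite or infinite) sequence over A: a partial map nat -> option A
   which is defined on an initial segment of nat. *)
Definition is_seq {A : Type} (s : nat -> option A) : Prop :=
  forall n, s n = None -> s (S n) = None.

Definition trunc {A : Type} (n : nat) (s : nat -> option A) : nat -> option A :=
  fun i => if Nat.ltb i n then s i else None.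

(* Locations, channels and data are three (distinct, hence
   disjoint) types.  [ends c = Some (sender, recipient)] if c has
   endpoints, [None] if it has neither. *)
Record frame := {
  LO : Type;
  CH : Type;
  D : Type;
  ends : CH -> option (LO * LO);
  traces : LO -> (nat -> option (CH * D)) -> Prop;
  E : Type;
  chan : E -> CH;
  msg : E -> D;
  traces_seq : forall l s, traces l s -> is_seq s;
  traces_prefix : forall l s n, traces l s -> traces l (trunc n s);
  traces_chans : forall l s n c v, traces l s -> s n = Some (c, v) ->
      exists a b, ends c = Some (a, b) /\ (a = l \/ b = l)
}.

Section Frame.
Variable F : frame.

Definition endpoint (l : LO F) (c : CH F) : Prop :=
  exists a b, ends F c = Some (a, b) /\ (a = l \/ b = l).

Record sys := { ev : E F -> Prop; ord : E F -> E F -> Prop }.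

Definition is_sys (S : sys) : Prop :=
  (forall e1 e2, ord S e1 e2 -> ev S e1 /\ ev S e2) /\
  (forall e, ev S e -> ord S e e) /\
  (forall e1 e2, ord S e1 e2 -> ord S e2 e1 -> e1 = e2) /\
  (forall e1 e2 e3, ord S e1 e2 -> ord S e2 e3 -> ord S e1 e3) /\
  (forall e, ev S e -> exists l : list (E F), forall e', ord S e' e -> In e' l).

Definition label (e : E F) : CH F * D F := (chan F e, msg F e).

Definition local (l : LO F) (e : E F) : Prop := endpoint l (chan F e).

Definition execution (S : sys) : Prop :=
  is_sys S /\
  forall l : LO F,
    (forall e1 e2, ev S e1 -> ev S e2 -> local l e1 -> local l e2 ->
        ord S e1 e2 \/ ord S e2 e1) /\
    exists s : nat -> option (E F),
      is_seq s /\
      (forall n e, s n = Some e -> ev S e /\ local l e) /\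
      (forall e, ev S e -> local l e -> exists n, s n = Some e) /\
      (forall n m e1 e2, s n = Some e1 -> s m = Some e2 ->
          (ord S e1 e2 <-> n <= m)) /\
      traces F l (fun n => option_map label (s n)).

Definition restrict (C : CH F -> Prop) (S : sys) : sys :=
  {| ev := fun e => ev S e /\ C (chan F e);
     ord := fun e1 e2 => ord S e1 e2 /\ C (chan F e1) /\ C (chan F e2) |}.

Definition sys_eq (S T : sys) : Prop :=
  (forall e, ev S e <-> ev T e) /\ (forall e1 e2, ord S e1 e2 <-> ord T e1 e2).

Definition lruns (C : CH F -> Prop) (X : sys) : Prop :=
  exists A, execution A /\ sys_eq (restrict C A) X.

Definition J (C C' : CH F -> Prop) (B X : sys) : Prop :=
  exists A, execution A /\ sys_eq (restrict C A) B /\ sys_eq (restrict C' A) X.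

Definition no_disclosure (C C' : CH F -> Prop) : Prop :=
  forall B, lruns C B -> forall X, J C C' B X <-> lruns C' X.

Definition adj (l1 l2 : LO F) : Prop :=
  exists c a b, ends F c = Some (a, b) /\
    ((a = l1 /\ b = l2) \/ (a = l2 /\ b = l1)).

Definition path_between (Cs Co : CH F -> Prop) : Prop :=
  exists l1 l2 c1 c2,
    Co c1 /\ endpoint l1 c1 /\ Cs c2 /\ endpoint l2 c2 /\
    clos_refl_trans (LO F) adj l1 l2.

End Frame.

(* Main.v *)
Require Import Defs.
From Stdlib Require Import List Relations Classical.

Section Aux.
Variable F : frame.
Variables Cs Co : CH F -> Prop.

Definition Lr (l : LO F) : Prop :=
  exists l0 c0, Co c0 /\ endpoint F l0 c0 /\ clos_refl_trans (LO F) (adj F) l0 l.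
Definition Kc (c : CH F) : Prop := Co c \/ exists l, Lr l /\ endpoint F l c.

Lemma ends_adj l l' c : endpoint F l c -> endpoint F l' c ->
  clos_refl_trans (LO F) (adj F) l l'.
Proof.
  intros [a [b [H1 H2]]] [a' [b' [H1' H2']]].
  rewrite H1 in H1'. injection H1' as <- <-.
  destruct H2 as [<-| <-]; destruct H2' as [<-| <-];
  try apply rt_refl; apply rt_step; exists c, a, b; auto.
Qed.

Lemma L_K l e : Lr l -> endpoint F l (chan F e) -> Kc (chan F e).
Proof. intros HL He. right. exists l. auto. Qed.

Lemma nL_K l c : ~ Lr l -> endpoint F l c -> ~ Kc c.
Proof.
  intros HL He [HK|[l' [[l0 [c0 [H1 [H2 H3]]]] H4]]].
  - apply HL. exists l, c. split; [auto|split; [auto|apply rt_refl]].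
  - apply HL. exists l0, c0. split; [auto|split; [auto|]].
    eapply rt_trans; [exact H3|]. eapply ends_adj; eauto.
Qed.

Hypothesis Hside : forall c, Cs c -> Co c -> ends F c <> None.
Hypothesis Hnp : ~ path_between F Cs Co.

Lemma Cs_nK c : Cs c -> ~ Kc c.
Proof.
  intros Hc [HK|[l [[l0 [c0 [H1 [H2 H3]]]] H4]]].
  - pose proof (Hside c Hc HK) as Hn.
    destruct (ends F c) as [[a b]|] eqn:Ee; [|congruence].
    apply Hnp. exists a, a, c, c. repeat split; auto;
      try (exists a, b; auto); apply rt_refl.
  - apply Hnp. exists l0, l, c0, c. repeat split; auto.
Qed.

Variables A1 A2 : sys F.
Hypothesis E1 : execution F A1.
Hypothesis E2 : execution F A2.

Definition Am : sys F :=
  {| ev := fun e => (ev F A2 e /\ Kc (chan F e)) \/ (ev F A1 e /\ ~ Kc (chan F e));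
     ord := fun e1 e2 => (ord F A2 e1 e2 /\ Kc (chan F e1) /\ Kc (chan F e2)) \/
                         (ord F A1 e1 e2 /\ ~ Kc (chan F e1) /\ ~ Kc (chan F e2)) |}.

Lemma Am_sys : is_sys F Am.
Proof.
  destruct E1 as [[a1 [b1 [c1 [d1 f1]]]] _].
  destruct E2 as [[a2 [b2 [c2 [d2 f2]]]] _].
  split; [|split; [|split; [|split]]]; simpl.
  - intros x y [[H [Hx Hy]]|[H [Hx Hy]]].
    + destruct (a2 _ _ H). tauto.
    + destruct (a1 _ _ H). tauto.
  - intros x [[H Hx]|[H Hx]]; [left|right]; auto.
  - intros x y [[H [Hx Hy]]|[H [Hx Hy]]] [[H' [Hx' Hy']]|[H' [Hx' Hy']]]; try tauto; eauto.
  - intros x y z [[H [Hx Hy]]|[H [Hx Hy]]] [[H' [Hx' Hy']]|[H' [Hx' Hy']]]; try tauto.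
    + left. split; eauto.
    + right. split; eauto.
  - intros x [[H Hx]|[H Hx]].
    + destruct (f2 x H) as [l Hl]. exists l. intros y [[H1 _]|[_ [_ Hy]]]; auto. tauto.
    + destruct (f1 x H) as [l Hl]. exists l. intros y [[_ [_ Hy]]|[H1 _]]; auto. tauto.
Qed.

Lemma Am_exec : execution F Am.
Proof.
  split; [exact Am_sys|]. intros l.
  destruct (classic (Lr l)) as [HL|HL].
  - destruct E2 as [_ Hl]. destruct (Hl l) as [lin [s [s1 [s2 [s3 [s4 s5]]]]]].
    assert (Kl : forall e, local F l e -> Kc (chan F e)) by (intros; eapply L_K; eauto).
    split.
    + intros x y [[Hx _]|[_ Hx]] [[Hy _]|[_ Hy]] lx ly;
        try (exfalso; eauto; fail).
      destruct (lin x y Hx Hy lx ly); [left|right]; left; auto.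
    + exists s. split; [auto|split; [|split; [|split]]]; auto.
      * intros n e Hs. destruct (s2 n e Hs). simpl. split; auto.
      * intros e [[He _]|[_ He]] le; [|exfalso; eauto]. auto.
      * intros n m x y Hn Hm. destruct (s2 _ _ Hn), (s2 _ _ Hm).
        rewrite <- (s4 _ _ _ _ Hn Hm). simpl. split.
        -- intros [[Hq _]|[_ [Hq _]]]; auto. exfalso; eauto.
        -- intros Hq. left. auto.
  - destruct E1 as [_ Hl]. destruct (Hl l) as [lin [s [s1 [s2 [s3 [s4 s5]]]]]].
    assert (Kl : forall e, local F l e -> ~ Kc (chan F e)) by (intros; eapply nL_K; eauto).
    split.
    + intros x y [[_ Hx]|[Hx _]] [[_ Hy]|[Hy _]] lx ly;
        try (exfalso; apply (Kl x lx); assumption);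
        try (exfalso; apply (Kl y ly); assumption).
      destruct (lin x y Hx Hy lx ly); [left|right]; right; auto.
    + exists s. split; [auto|split; [|split; [|split]]]; auto.
      * intros n e Hs. destruct (s2 n e Hs). simpl. split; auto.
      * intros e [[_ He]|[He _]] le; [exfalso; apply (Kl e le); assumption|]. auto.
      * intros n m x y Hn Hm. destruct (s2 _ _ Hn), (s2 _ _ Hm).
        rewrite <- (s4 _ _ _ _ Hn Hm). simpl. split.
        -- intros [[_ [Hq _]]|[Hq _]]; auto. exfalso; apply (Kl x); auto.
        -- intros Hq. right. auto.
Qed.

Lemma Am_Cs : sys_eq F (restrict F Cs Am) (restrict F Cs A1).
Proof.
  split; simpl.
  - intros e. pose proof (Cs_nK (chan F e)). tauto.
  - intros x y. pose proof (Cs_nK (chan F x)). pose proof (Cs_nK (chan F y)). tauto.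
Qed.

Lemma Am_Co : sys_eq F (restrict F Co Am) (restrict F Co A2).
Proof.
  assert (forall c, Co c -> Kc c) by (intros; left; auto).
  split; simpl.
  - intros e. pose proof (H (chan F e)). tauto.
  - intros x y. pose proof (H (chan F x)). pose proof (H (chan F y)). tauto.
Qed.

End Aux.

Lemma sys_eq_trans F (S T U : sys F) : sys_eq F S T -> sys_eq F T U -> sys_eq F S U.
Proof.
  intros [a b] [c d]. split; intros; [rewrite a, c|rewrite b, d]; tauto.
Qed.

Theorem corollary1 (F : frame) (Cs Co : CH F -> Prop) :
  (* side condition, see NOTES.md FIDELITY: no endpoint-less channel is
     shared by Cs and Co (otherwise the statement is literally false) *)
  (forall c, Cs c -> Co c -> ends F c <> None) ->
  ~ path_between F Cs Co ->
  no_disclosure F Cs Co.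
Proof.
  intros Hs Hn B [A1 [E1 HB]] X. split.
  - intros [A [EA [_ HX]]]. exists A. auto.
  - intros [A2 [E2 HX]]. exists (Am F Co A1 A2). split; [apply Am_exec; auto|split].
    + eapply sys_eq_trans; [apply Am_Cs; auto|exact HB].
    + eapply sys_eq_trans; [apply Am_Co|exact HX].
Qed.
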